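(* A nonzero finitely generated $\mathbb{Z}$-module is not isomorphic to the inverse limit of any inverse system, indexed by a countable upward directed poset, of injective $\mathbb{Z}$-modules and surjective homomorphisms.
   Context: For $\mathbb{Z}$-modules, injective is equivalent to divisible. *)

(* Defs.v *)
From HB Require Import structures.
From mathcomp Require Import all_boot all_order all_algebra.
Set Implicit Arguments. Unset Strict Implicit. Unset Printing Implicit Defensive.
Import GRing.Theory.
Local Open Scope ring_scope.

Definition fin_gen_zmod (M : zmodType) : Prop :=
  exists s : seq M, forall x : M,
    exists c : seq int, x = \sum_(i < size s) s`_i *~ c`_i.

Definition injective_zmod (E : zmodType) : Prop :=
  forall (A B : zmodType) (f : A -> B) (g : A -> E),
    GRing.zmod_morphism f -> injective f -> GRing.zmod_morphism g ->
    exists h : B -> E, GRing.zmod_morphism h /\ forall a, h (f a) = g a.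

Definition countable_directed_poset (I : Type) (le : I -> I -> bool) : Prop :=
  [/\ (forall i, le i i),
      (forall i j k, le i j -> le j k -> le i k),
      (forall i j, le i j -> le j i -> i = j),
      (forall i j, exists k, le i k && le j k)
    & exists c : I -> nat, injective c].

Definition inverse_system (I : Type) (le : I -> I -> bool)
    (E : I -> zmodType) (phi : forall i j, le i j -> E j -> E i) : Prop :=
  [/\ (forall i j (h : le i j), GRing.zmod_morphism (phi i j h)),
      (forall i (h : le i i) x, phi i i h x = x)
    & (forall i j k (hij : le i j) (hjk : le j k) (hik : le i k) x,
          phi i j hij (phi j k hjk x) = phi i k hik x)].

Definition in_inv_limit (I : Type) (le : I -> I -> bool)
    (E : I -> zmodType) (phi : forall i j, le i j -> E j -> E i)
    (x : forall i, E i) : Prop :=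
  forall i j (h : le i j), phi i j h (x j) = x i.

Definition iso_to_inv_limit (M : zmodType) (I : Type) (le : I -> I -> bool)
    (E : I -> zmodType) (phi : forall i j, le i j -> E j -> E i) : Prop :=
  exists f : M -> forall i, E i,
    [/\ (forall i, GRing.zmod_morphism (fun m => f m i)),
        injective f,
        (forall m, in_inv_limit phi (f m))
      & (forall x, in_inv_limit phi x -> exists m, f m = x)].

(* Main.v *)
Require Import Defs.
From HB Require Import structures.
From mathcomp Require Import all_boot all_order all_algebra.
From Stdlib Require Import ClassicalEpsilon FunctionalExtensionality.
Import GRing.Theory.
Local Open Scope ring_scope.

Lemma inj_div (E : zmodType) : injective_zmod E ->
  forall (e : E) (n : nat), (0 < n)%N -> exists y, y *+ n = e.
Proof.
move=> hE e n hn.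
have hf : GRing.zmod_morphism (fun x : int => x * n%:Z) by move=> x y; rewrite mulrBl.
have hfi : injective (fun x : int => x * n%:Z).
  apply: mulIf; by rewrite eqz_nat -lt0n.
have hg : GRing.zmod_morphism (fun x : int => e *~ x) by move=> x y; rewrite mulrzBr.
have [h [hh he]] := hE int int _ _ hf hfi hg.
exists (h 1); have := he 1; rewrite mul1r mulr1z => <-.
pose h' : {additive int -> E} := HB.pack h (GRing.isZmodMorphism.Build int E h hh).
have -> : h = h' by [].
by rewrite -raddfMn natz.

Qed.

Definition chain (I : Type) (i : I) (ub : I -> I -> I) (dec : nat -> I) : nat -> I :=
  fix k n := match n with 0%N => i | n'.+1 => ub (k n') (dec n') end.
Arguments chain {I}.

Definition chainx (I : Type) (i : I) (ub : I -> I -> I) (dec : nat -> I)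
  (E : I -> zmodType)
  (lf : forall n, E (chain i ub dec n) -> E (chain i ub dec n.+1)) (y : E i) :
  forall n, E (chain i ub dec n) :=
  fix xs n := match n return E (chain i ub dec n) with
              | 0%N => y | n'.+1 => lf n' (xs n') end.
Arguments chainx {I i ub dec E}.

Lemma lift_exists (I : Type) (le : I -> I -> bool)
    (E : I -> zmodType) (phi : forall i j, le i j -> E j -> E i) :
    countable_directed_poset le ->
    inverse_system phi ->
    (forall i j (h : le i j), forall y : E i, exists x : E j, phi i j h x = y) ->
    forall i (y : E i), exists x : forall j, E j, in_inv_limit phi x /\ x i = y.
Proof.
move=> [hrefl htrans _ hdir [c hc]] [_ hid hcomp] hsurj i y.
pose ub a b := proj1_sig (constructive_indefinite_description _ (hdir a b)).
have hub : forall a b, le a (ub a b) && le b (ub a b).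
  by move=> a b; exact: (proj2_sig (constructive_indefinite_description _ (hdir a b))).
pose dec n := epsilon (inhabits i) (fun j => c j = n).
have hdec : forall j, dec (c j) = j.
  move=> j; apply: hc; exact: (epsilon_spec (inhabits i) (fun j' => c j' = c j) (ex_intro _ j erefl)).
pose k := chain i ub dec.
have hk : forall n, le (k n) (k n.+1) by move=> n; case/andP: (hub (k n) (dec n)).
pose lf n (v : E (k n)) : E (k n.+1) :=
  proj1_sig (constructive_indefinite_description _ (hsurj _ _ (hk n) v)).
have hlf : forall n v, phi _ _ (hk n) (lf n v) = v.
  by move=> n v; exact: (proj2_sig (constructive_indefinite_description _ (hsurj _ _ (hk n) v))).
pose xs := chainx lf y.
have L1 : forall m m', (m <= m')%N -> le (k m) (k m').
  move=> m; elim=> [|m' IH]; first by rewrite leqn0 => /eqP ->.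
  rewrite leq_eqVlt => /orP [/eqP -> //| hm]; exact: htrans (IH hm) (hk m').
have L2 : forall m m' (h : le (k m) (k m')), (m <= m')%N -> phi _ _ h (xs m') = xs m.
  move=> m; elim=> [|m' IH] h.
    by rewrite leqn0 => /eqP e; move: h; rewrite e => h; exact: hid.
  rewrite leq_eqVlt => /orP [/eqP e| hm].
    by move: h; rewrite e => h; exact: hid.
  rewrite -(hcomp (k m) (k m') (k m'.+1) (L1 _ _ (hm : (m <= m')%N)) (hk m') h).
  by rewrite /xs /= -/(xs m') hlf IH.
have L3 : forall j m m' (h1 : le j (k m)) (h2 : le j (k m')), (m <= m')%N ->
    phi _ _ h1 (xs m) = phi _ _ h2 (xs m').
  move=> j m m' h1 h2 hm; rewrite -(L2 m m' (L1 _ _ hm) hm).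
  by rewrite (hcomp _ _ _ h1 (L1 _ _ hm) h2).
have hj : forall j, le j (k (c j).+1).
  move=> j; change (le j (ub (k (c j)) (dec (c j)))).
  by have := hub (k (c j)) (dec (c j)); rewrite hdec => /andP [_ ->].
exists (fun j => phi _ _ (hj j) (xs (c j).+1)); split.
  move=> j j' h.
  have hK : le j (k (maxn (c j).+1 (c j').+1)) by apply: htrans (hj j) (L1 _ _ (leq_maxl _ _)).
  have hK' : le j' (k (maxn (c j).+1 (c j').+1)) by apply: htrans (hj j') (L1 _ _ (leq_maxr _ _)).
  rewrite (L3 _ _ _ (hj j') hK' (leq_maxr _ _)) (hcomp _ _ _ h hK' hK).
  by rewrite (L3 _ _ _ (hj j) hK (leq_maxl _ _)).
rewrite -(L3 i 0%N _ (hrefl i)) //; exact: hid.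
Qed.

Lemma fg_div_zero (D : zmodType) (r : nat) (g : 'I_r -> D) :
  (forall x, exists c : seq int, x = \sum_(i < r) g i *~ c`_i) ->
  (forall (x : D) (n : nat), (0 < n)%N -> exists y, y *+ n = x) ->
  forall x : D, x = 0.
Proof.
move=> hgen hdiv.
have hP : forall j : 'I_r, exists c : seq int,
    g j == \sum_(i < r) g i *~ (c`_i * 2).
  move=> j; have [y hy] := hdiv (g j) 2%N isT.
  have [c hc] := hgen y; exists c; apply/eqP.
  rewrite -hy hc -mulrz_nat mulrz_suml; apply: eq_bigr => i _.
  by rewrite mulrzA.
pose cj (j : 'I_r) := xchoose (hP j).
have hcj : forall j, g j = \sum_(i < r) g i *~ ((cj j)`_i * 2).
  by move=> j; apply/eqP; exact: (xchooseP (hP j)).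
pose A : 'M[int]_r := \matrix_(j, i) ((j == i)%:R - (cj j)`_i * 2).
have hA : forall j, \sum_(i < r) g i *~ A j i = 0.
  move=> j; under eq_bigr => i _ do rewrite mxE mulrzBr.
  rewrite sumrB -hcj (bigD1 j) //= eqxx mulr1z big1 ?addr0 ?subrr //.
  by move=> i /negPf; rewrite eq_sym => ->; rewrite mulr0z.
have hd : forall i, g i *~ \det A = 0.
  move=> i.
  have : \sum_(k < r) g k *~ (\adj A *m A) i k = 0.
    under eq_bigr => k _ do rewrite mxE mulrz_sumr.
    rewrite exchange_big /= big1 // => j _.
    under eq_bigr => k _ do rewrite mulrC mulrzA.
    by rewrite -mulrz_suml hA mul0rz.
  rewrite mul_adj_mx (bigD1 i) //= mxE eqxx mulr1n big1 ?addr0 // => k /negPf.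
  by rewrite mxE eq_sym => ->; rewrite mulr0n mulr0z.
have hdet : \det A != 0.
  apply/eqP => h0.
  have : \det (map_mx (intr : {rmorphism int -> 'Z_2}) A) = 1.
    have -> : map_mx (intr : {rmorphism int -> 'Z_2}) A = 1%:M.
      apply/matrixP => j i; rewrite !mxE rmorphB rmorphM /= rmorph_nat.
      have -> : (2%:~R : 'Z_2) = 0 by apply/val_inj.
      by rewrite mulr0 subr0.
    exact: det1.
  by rewrite det_map_mx h0 rmorph0 => /esym/eqP; rewrite oner_eq0.
have hall : forall x : D, x *~ \det A = 0.
  move=> x; have [c ->] := hgen x; rewrite mulrz_suml big1 // => i _.
  by rewrite mulrzAC hd mul0rz.
move=> x.
have [y hy] : exists y, y *+ `|\det A|%N = x by apply: hdiv; rewrite absz_gt0.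
rewrite -hy; move: (hall y) hdet; case: (\det A) => n //=.
by move=> h _; rewrite NegzE mulrNz in h; apply/eqP; rewrite -oppr_eq0 h.
Qed.

Lemma morph_comb (U V : zmodType) (f : U -> V) (hf : GRing.zmod_morphism f)
  (s : seq U) (c : seq int) :
  f (\sum_(i < size s) s`_i *~ c`_i) = \sum_(i < size s) (f s`_i) *~ c`_i.
Proof.
pose g : {additive U -> V} := HB.pack f (GRing.isZmodMorphism.Build U V f hf).
have -> : f = g by [].
rewrite raddf_sum; apply: eq_bigr => i _; by rewrite raddfMz.
Qed.

Theorem mainTheorem9 (M : zmodType) :
  fin_gen_zmod M -> (exists m : M, m != 0) ->
  forall (I : Type) (le : I -> I -> bool)
         (E : I -> zmodType) (phi : forall i j, le i j -> E j -> E i),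
    countable_directed_poset le ->
    inverse_system phi ->
    (forall i, injective_zmod (E i)) ->
    (forall i j (h : le i j), forall y : E i, exists x : E j, phi i j h x = y) ->
    ~ iso_to_inv_limit M phi.
Proof.
move=> [s hs] [m0 hm0] I le E phi hdir hsys hinj hsurj [f [hadd finj flim fsurj]].
have Ez : forall i (e : E i), e = 0.
  move=> i; apply: (@fg_div_zero (E i) (size s) (fun k => f s`_k i)).
    move=> x; have [xf [hxf hxi]] := @lift_exists I le E phi hdir hsys hsurj i x.
    have [m hm] := fsurj xf hxf; have [c hc] := hs m; exists c.
    rewrite -hxi -hm hc; exact: (@morph_comb M (E i) (fun m => f m i) (hadd i) s c).
  exact: inj_div (hinj i).
have hf : f m0 = f 0.
  by apply: functional_extensionality_dep => i; rewrite (Ez _ (f m0 i)) (Ez _ (f 0 i)).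
by move: hm0; rewrite (finj _ _ hf) eqxx.
Qed.
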